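(* Let $k\ge 2$ and $n=2k+1$. If a connected graph $G$ has the same distance spectrum as the friendship graph $F^{k}_{n}$, then $\operatorname{diam}(G)=2$ and $|E(G)|=|E(F^{k}_{n})|=3k$.
   Context: For a connected graph $G$, the distance matrix $D(G)$ has as $(i,j)$-entry the distance between the $i$-th and $j$-th vertices; the distance spectrum consists of its eigenvalues. The friendship graph $F^{k}_{n}$ ($n=2k+1$) is obtained by taking $k$ copies of $C_3$ and identifying one vertex of each copy into a single common vertex. $\operatorname{diam}(G)$ is the maximum distance between two vertices of $G$. *)

(* Defs.v *)
From mathcomp Require Import all_boot all_order all_algebra.
Set Implicit Arguments. Unset Strict Implicit. Unset Printing Implicit Defensive.
Import GRing.Theory Num.Theory.

(* A simple graph on a finite vertex type T is a symmetric irreflexive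
   relation e : rel T (the adjacency relation). *)
Section Graphs.
Variable T : finType.
Variable e : rel T.

Definition ball (m : nat) (u : T) : {set T} :=
  iter m (fun S => S :|: [set y | [exists x in S, e x y]]) [set u].

(* graph distance: the least m with v in ball m u
   (equals #|T| if v is unreachable from u; irrelevant for connected graphs) *)
Definition gdist (u v : T) : nat :=
  find (fun m => v \in ball m u) (iota 0 #|T|).

Definition gconnected : Prop := forall u v : T, connect e u v.

Definition diam : nat := \max_(u : T) \max_(v : T) gdist u v.

Definition nedges : nat := #|[set A : {set T} | [exists x, exists y, e x y && (A == [set x; y])]]|.
End Graphs.

Definition distmx (n : nat) (e : rel 'I_n) : 'M[int]_n :=
  \matrix_(i < n, j < n) Posz (gdist e i j).

(* Friendship graph F^k_n, n = 2k+1, on 'I_(2k+1): vertex 0 is the common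
   vertex, and for i < k the triangle is {0, 2i+1, 2i+2}. *)
Definition friend_rel (k : nat) : rel 'I_(k.*2.+1) :=
  fun x y => (x != y) &&
    [|| (x == 0 :> nat), (y == 0 :> nat) | ((x : nat).-1./2 == (y : nat).-1./2)].
Arguments friend_rel k : clear implicits.

(* Main.v *)
Require Import Defs.
From mathcomp Require Import all_boot all_order all_algebra.
From mathcomp Require Import zify algC ring.
Set Implicit Arguments. Unset Strict Implicit. Unset Printing Implicit Defensive.
Import GRing.Theory Num.Theory Order.TTheory.

Section File_G1.

Section GraphLemmas.
Variable T : finType.
Variable e : rel T.

Lemma in_ballS m u v : (v \in ball e m.+1 u) =
  (v \in ball e m u) || [exists x in ball e m u, e x v].
Proof. by rewrite /ball iterS !inE. Qed.

Lemma in_ball0 u v : (v \in ball e 0 u) = (v == u).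
Proof. by rewrite /ball /= inE. Qed.

Lemma ball_mono m m' u v : m <= m' -> v \in ball e m u -> v \in ball e m' u.
Proof.
move=> /subnK <-; elim: (m' - m) => [//|j IH] H.
by rewrite addSn in_ballS IH.
Qed.

Lemma ball_edge m u x y : x \in ball e m u -> e x y -> y \in ball e m.+1 u.
Proof. by move=> Hx Hxy; rewrite in_ballS; apply/orP; right; apply/existsP; exists x; rewrite Hx. Qed.

Lemma in_ballSP m u v : v \in ball e m.+1 u ->
  v \in ball e m u \/ exists2 x, x \in ball e m u & e x v.
Proof.
rewrite in_ballS => /orP[H|/existsP[x /andP[Hx Hxv]]]; [by left|right; by exists x].
Qed.

Lemma ball_trans i j u v w : v \in ball e i u -> w \in ball e j v -> w \in ball e (i + j) u.
Proof.
move=> Hv; elim: j w => [|j IH] w.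
  by rewrite in_ball0 addn0 => /eqP->.
move=> /in_ballSP [H|[x Hx Hxw]].
  by rewrite addnS; exact: ball_mono (leqnSn _) (IH _ H).
by rewrite addnS; apply: ball_edge (IH _ Hx) Hxw.
Qed.

Hypothesis esym : symmetric e.

Lemma ball_sym m u v : v \in ball e m u -> u \in ball e m v.
Proof.
elim: m v => [|m IH] v.
  by rewrite !in_ball0 eq_sym.
move=> /in_ballSP [H|[x Hx Hxv]].
  exact: ball_mono (leqnSn _) (IH _ H).
have H1 : x \in ball e 1 v by apply: (ball_edge (m:=0)); rewrite ?in_ball0 // esym.
exact: (ball_trans H1 (IH _ Hx)).
Qed.

Definition reach u v := exists2 m, m < #|T| & v \in ball e m u.

Lemma gdist_le u v m : reach u v -> (gdist e u v <= m) = (v \in ball e m u).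
Proof.
move=> [m0 Hm0 Hb].
have Hhas : has (fun m => v \in ball e m u) (iota 0 #|T|).
  by apply/hasP; exists m0; rewrite // mem_iota.
have Hlt : gdist e u v < #|T| by move: Hhas; rewrite has_find size_iota.
have Hin : v \in ball e (gdist e u v) u.
  by have := nth_find 0 Hhas; rewrite nth_iota.
apply/idP/idP => [H|H]; first exact: ball_mono H Hin.
rewrite leqNgt; apply/negP => Hlt2.
have := before_find 0 Hlt2; rewrite nth_iota ?H //; exact: ltn_trans Hlt2 Hlt.
Qed.

Lemma path_ball u p : path e u p -> last u p \in ball e (size p) u.
Proof.
elim: p u => [|y p IH] u /=; first by rewrite in_ball0.
move=> /andP[Huy Hp].
have H1 : y \in ball e 1 u by apply: (ball_edge (m:=0)); rewrite ?in_ball0.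
exact: ball_trans H1 (IH _ Hp).
Qed.

Lemma conn_reach u v : connect e u v -> reach u v.
Proof.
move=> /connectP [p Hp ->].
case: (shortenP Hp) => p' Hp' Hu _.
exists (size p'); last exact: path_ball.
have := max_card (mem (u :: p')); rewrite (card_uniqP Hu) /=; done.
Qed.

End GraphLemmas.

End File_G1.
Section File_G2.

Section Conn.
Variable T : finType.
Variable e : rel T.
Hypothesis esym : symmetric e.
Hypothesis Hr : forall u v, reach e u v.

Lemma gdist_leE u v m : (gdist e u v <= m) = (v \in ball e m u).
Proof. exact: gdist_le. Qed.

Lemma in_ball1 u v : (v \in ball e 1 u) = (v == u) || e u v.
Proof.
rewrite in_ballS in_ball0; congr (_ || _); apply/existsP/idP => [[x]|H].
  by rewrite in_ball0 => /andP[/eqP->].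
by exists u; rewrite in_ball0 eqxx.
Qed.

Lemma gdist0E u v : (gdist e u v == 0) = (u == v).
Proof. by rewrite -leqn0 gdist_leE in_ball0 eq_sym. Qed.

Lemma gdist_sym u v : gdist e u v = gdist e v u.
Proof.
by apply/eqP; rewrite eqn_leq !gdist_leE; apply/andP; split; apply: ball_sym => //;
  rewrite -gdist_leE.
Qed.

Lemma gdist_le1 u v : (gdist e u v <= 1) = (u == v) || e u v.
Proof. by rewrite gdist_leE in_ball1 eq_sym. Qed.

Lemma gdist_tri u v w : gdist e u w <= gdist e u v + gdist e v w.
Proof.
rewrite gdist_leE; apply: (ball_trans (v:=v)); by rewrite -gdist_leE.
Qed.

Lemma gdist_desc u v m : gdist e u v = m.+1 -> exists x, gdist e u x = m /\ e x v.
Proof.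
move=> H.
have Hv : v \in ball e m.+1 u by rewrite -gdist_leE H.
have Hnv : v \notin ball e m u by rewrite -gdist_leE H ltnn.
case: (in_ballSP Hv) => [Hc|[x Hx Hxv]]; first by rewrite Hc in Hnv.
exists x; split => //; apply/eqP; rewrite eqn_leq gdist_leE Hx /=.
rewrite leqNgt; apply/negP => Hlt.
have : v \in ball e m u.
  apply: (ball_mono Hlt); apply: (ball_edge _ Hxv); by rewrite -gdist_leE.
by rewrite (negPf Hnv).
Qed.

Lemma gdist_exists3 u v : 3 <= gdist e u v -> exists c, gdist e u c = 3.
Proof.
move=> H.
suff : forall m v, gdist e u v = m -> 3 <= m -> exists c, gdist e u c = 3 by move=> Hs; exact: Hs _ _ erefl H.
clear H v; elim=> [|m IH] v Hm H3; first by [].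
have [Hm3|Hne] := eqVneq m.+1 3; first by exists v; rewrite Hm Hm3.
have [x [Hx _]] := gdist_desc Hm.
by apply: (IH x Hx); lia.
Qed.

End Conn.

End File_G2.
Section File_F1.

Section Friend.
Variable k : nat.
Local Notation n := (k.*2.+1).
Local Notation F := (friend_rel k).

Definition pt (x : 'I_n) : 'I_n := inord (if odd x then x.+1 else x.-1).

Lemma pt_val (x : 'I_n) : x != 0 :> nat -> (pt x : nat) = if odd x then x.+1 else x.-1.
Proof.
move=> Hx; rewrite /pt inordK //; have := ltn_ord x; case: ifP => Ho; lia.
Qed.

Lemma friend_sym : symmetric F.
Proof.
move=> x y; rewrite /friend_rel eq_sym; congr (_ && _).
by rewrite orbA (orbC (x == 0 :> nat)) -orbA (eq_sym (_./2)).
Qed.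

Lemma friend_irr : irreflexive F.
Proof. by move=> x; rewrite /friend_rel eqxx. Qed.

Lemma friend0 (x : 'I_n) (y : 'I_n) : y == 0 :> nat -> F x y = (x != y).
Proof. by move=> Hy; rewrite /friend_rel (eqP Hy) eqxx orbT andbT. Qed.

Lemma friendN0 (x y : 'I_n) : y != 0 :> nat ->
  F x y = (x == 0 :> nat) || (x == pt y :> nat).
Proof.
move=> Hy; rewrite /friend_rel (negPf Hy) /= pt_val //.
have [Hx0|Hx0] := eqVneq (x : nat) 0.
  rewrite Hx0 /= andbT; apply/eqP => /(congr1 val) /=; lia.
rewrite /=; have [->|Hxy] := eqVneq x y.
  by rewrite /=; case: ifP; lia.
have Hxy' : (x : nat) != y by [].
rewrite /=; apply/eqP/eqP; case: ifP => Ho; lia.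
Qed.

Lemma pt_neq0 (x : 'I_n) : x != 0 :> nat -> pt x != 0 :> nat.
Proof. by move=> Hx; rewrite pt_val //; case: ifP; lia. Qed.

Lemma pt_neq (x : 'I_n) : x != 0 :> nat -> pt x != x.
Proof. by move=> Hx; apply/eqP => /(congr1 (@nat_of_ord _)); rewrite pt_val //; case: ifP; lia. Qed.

Lemma ptK (x : 'I_n) : x != 0 :> nat -> pt (pt x) = x.
Proof.
move=> Hx; apply: ord_inj; rewrite (pt_val (pt_neq0 Hx)) (pt_val Hx).
have := ltn_ord x; case Ho: (odd x) => /=; case: ifP => Ho2 Hlt; lia.
Qed.

End Friend.

End File_F1.
Section File_F2.

Section Friend2.
Variable k : nat.
Hypothesis k1 : 0 < k.
Local Notation n := (k.*2.+1).
Local Notation F := (friend_rel k).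

Lemma F_ball2 (u v : 'I_n) : v \in ball F 2 u.
Proof.
have H1 : ord0 \in ball F 1 u.
  rewrite in_ball1; case: (eqVneq ord0 u) => //= H.
  by rewrite friend0 // eq_sym.
have H2 : v \in ball F 1 ord0.
  rewrite in_ball1; case: (eqVneq v ord0) => //= H.
  rewrite friendN0 //; apply/eqP => Hv; move/eqP: H; apply; exact: ord_inj.
exact: (ball_trans H1 H2).
Qed.

Lemma F_reach u v : reach F u v.
Proof. by exists 2; [rewrite card_ord; lia | exact: F_ball2]. Qed.

Lemma gdistF (x y : 'I_n) :
  gdist F x y = if x == y then 0 else if F x y then 1 else 2.
Proof.
have Hr := F_reach.
have Hle : gdist F x y <= 2 by rewrite (gdist_leE Hr) F_ball2.
have H1 := gdist_le1 Hr x y.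
have H0 := gdist0E Hr x y.
case: (eqVneq x y) H0 H1 => [->|Hxy] H0 H1; first by apply/eqP; rewrite H0.
case HF: (F x y) H1 => H1; apply/eqP; rewrite /= in H0 H1; lia.
Qed.

End Friend2.

End File_F2.
Section File_F3.
Local Open Scope ring_scope.

Section Friend3.
Variable k : nat.
Hypothesis k1 : (0 < k)%N.
Local Notation n := (k.*2.+1).
Local Notation F := (friend_rel k).

Lemma ord0_nat (x : 'I_n) : (x != ord0) = (x != 0 :> nat).
Proof. by []. Qed.

Lemma nbr_sum (f : 'I_n -> algC) (y : 'I_n) : y != 0 :> nat ->
  \sum_x f x * (F x y)%:R = f ord0 + f (pt y).
Proof.
move=> Hy.
rewrite (bigD1 ord0) //= friendN0 // eqxx /= mulr1.
rewrite (bigD1 (pt y)) /=; last by rewrite ord0_nat pt_neq0.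
rewrite friendN0 // eqxx orbT mulr1 big1 ?addr0 // => x /andP[Hx1 Hx2].
have Hx1n : (x == 0 :> nat) = false by apply/negbTE.
have Hx2n : (x == pt y :> nat) = false by apply/negbTE.
by rewrite friendN0 // Hx1n Hx2n mulr0.
Qed.

Lemma nbr_sum0 (f : 'I_n -> algC) :
  \sum_x f x * (F x ord0)%:R = \sum_x f x - f ord0.
Proof.
rewrite [in RHS](bigD1 ord0) //= [f ord0 + _]addrC addrK (bigD1 ord0) // friend_irr /= mulr0 add0r.
by apply: eq_bigr => x Hx; rewrite friend0 // Hx mulr1.
Qed.

Lemma DF_entry (x y : 'I_n) :
  (gdist F x y)%:R = 2 - 2 * (x == y)%:R - (F x y)%:R :> algC.
Proof.
rewrite gdistF //; case: eqVneq => [->|Hxy]; first by rewrite friend_irr /=; ring.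
by case: (F x y) => /=; ring.
Qed.

Lemma row_sum (f : 'I_n -> algC) (y : 'I_n) :
  \sum_x f x * (gdist F x y)%:R =
  2 * \sum_x f x - 2 * f y - \sum_x f x * (F x y)%:R.
Proof.
have -> : \sum_x f x * (gdist F x y)%:R =
   \sum_x (2 * f x - 2 * (f x * (x == y)%:R) - f x * (F x y)%:R).
  by apply: eq_bigr => x _; rewrite DF_entry; ring.
rewrite !sumrB -!mulr_sumr; congr (_ - _ * _ - _).
rewrite (bigD1 y) //= eqxx mulr1 big1 ?addr0 // => x /negPf ->; by rewrite mulr0.
Qed.

Lemma F_eig_ge (lam : algC) (u : 'rV[algC]_n) : lam \is Num.real -> u != 0 ->
  u *m map_mx (intr : int -> algC) (distmx F) = lam *: u -> -3 <= lam.
Proof.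
move=> Hr Hu Heq.
pose f := fun i => u 0 i.
have E : forall y, \sum_x f x * (gdist F x y)%:R = lam * f y.
  move=> y; have := congr1 (fun M : 'M[algC]_(1, n) => M 0 y) Heq; rewrite !mxE => <-.
  by apply: eq_bigr => x _; rewrite !mxE.
pose S := \sum_x f x.
have E0 : S - f ord0 = lam * f ord0.
  by rewrite -E row_sum nbr_sum0 -/S; ring.
have Ey : forall y : 'I_n, y != 0 :> nat -> 2 * S - 2 * f y - (f ord0 + f (pt y)) = lam * f y.
  by move=> y Hy; rewrite -E row_sum nbr_sum.
have [->|Hl1] := eqVneq lam (-1); first by rewrite lerN2 ler1n.
have Hp : forall y : 'I_n, y != 0 :> nat -> f (pt y) = f y.
  move=> y Hy; have H1 := Ey y Hy; have H2 := Ey (pt y) (pt_neq0 Hy).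
  rewrite ptK // in H2.
  have : (lam + 1) * (f y - f (pt y)) = (lam * f y - lam * f (pt y)) + (f y - f (pt y)) by ring.
  rewrite -H1 -H2.
  have -> : 2 * S - 2 * f y - (f ord0 + f (pt y)) - (2 * S - 2 * f (pt y) - (f ord0 + f y)) +
    (f y - f (pt y)) = 0 by ring.
  move/eqP; rewrite mulf_eq0 => /orP[|/eqP/subr0_eq -> //].
  by rewrite addr_eq0 (negPf Hl1).
have Ey2 : forall y : 'I_n, y != 0 :> nat -> (lam + 3) * f y = 2 * S - f ord0.
  move=> y Hy; have := Ey y Hy; rewrite Hp // => H.
  by rewrite mulrDl -H; ring.
have [->|Hl3] := eqVneq lam (-3); first by rewrite lexx.
have Hl3' : lam + 3 != 0 by rewrite addr_eq0.
pose a := (2 * S - f ord0) / (lam + 3).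
have Ha : forall y : 'I_n, y != 0 :> nat -> f y = a.
  by move=> y Hy; rewrite /a -(Ey2 y Hy) [_ * f y]mulrC mulfK.
have Ha2 : (lam + 3) * a = 2 * S - f ord0 by rewrite mulrC /a divfK.
pose K : algC := (k.*2)%:R.
have HS : S = f ord0 + K * a.
  rewrite /S (bigD1 ord0) //=; congr (_ + _).
  rewrite (eq_bigr (fun _ => a)) => [|x Hx]; last by apply: Ha.
  rewrite sumr_const.
  have -> : #|[pred i : 'I_n | i != ord0]| = k.*2 by rewrite cardC1 card_ord.
  by rewrite /K mulr_natl.
have E0' : K * a = lam * f ord0 by rewrite -E0 HS; ring.
have Ha0 : f ord0 = (lam + 3) * a - 2 * K * a by rewrite Ha2 HS; ring.
have Hz : a * ((lam + 3) * (lam - 2 * K) + 5 * K) = 0.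
  have -> : a * ((lam + 3) * (lam - 2 * K) + 5 * K) =
     lam * ((lam + 3) * a - 2 * K * a) - K * a by ring.
  by rewrite -Ha0 E0' subrr.
have [Haz|Hanz] := eqVneq a 0.
  exfalso; move/negP: Hu; apply; apply/eqP/rowP => i; rewrite mxE.
  have [Hi|Hi] := eqVneq (i : nat) 0.
    have -> : i = ord0 by apply: ord_inj.
    by rewrite -/(f ord0) Ha0 Haz; ring.
  by rewrite -/(f i) Ha.
move/eqP: Hz; rewrite mulf_eq0 (negPf Hanz) /= addr_eq0 => /eqP Hq.
have HK : 0 < K by rewrite ltr0n; lia.
rewrite real_leNgt ?rpredN ?realn //; apply/negP => Hlt.
have H1 : lam + 3 < 0 by have := Hlt; rewrite -subr_lt0 opprK.
have H2 : lam - 2 * K < 0.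
  rewrite subr_lt0; apply: (lt_le_trans Hlt).
  by apply: (@le_trans _ _ 0); [rewrite oppr_le0 ler0n | rewrite mulr_ge0 ?ler0n // ltW].
have := nmulr_rgt0 (lam - 2 * K) H1; rewrite H2 Hq oppr_gt0 => H.
have H5 : 0 < 5 * K by rewrite mulr_gt0 // ltr0n.
by move: (lt_trans H5 H); rewrite ltxx.
Qed.

End Friend3.

End File_F3.
Section File_C1.

Section Count.
Variable T : finType.
Variable e : rel T.
Hypothesis esym : symmetric e.
Hypothesis eirr : irreflexive e.

Definition eset := [set A : {set T} | [exists x, exists y, e x y && (A == [set x; y])]].

Lemma two_set (a b x y : T) : e a b -> x != y ->
  ([set a; b] == [set x; y]) = ((a, b) == (x, y)) || ((a, b) == (y, x)).
Proof.
move=> Hab Hxy; have Hab' : a != b by apply: contraTneq Hab => ->; rewrite eirr.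
apply/eqP/orP => [H|[/eqP[-> ->]|/eqP[-> ->]]]; last 2 first.
- by [].
- by rewrite setUC.
have Hx : x \in [set a; b] by rewrite H set21.
have Hy : y \in [set a; b] by rewrite H set22.
have Ha : a \in [set x; y] by rewrite -H set21.
have Hb : b \in [set x; y] by rewrite -H set22.
move: Hx Hy Ha Hb; rewrite !in_set2.
case/orP=> /eqP Hx; case/orP=> /eqP Hy; subst.
- by rewrite eqxx in Hxy.
- by left.
- by right.
- by rewrite eqxx in Hxy.
Qed.

Lemma count_edges : \sum_x \sum_y (e x y : nat) = 2 * nedges e.
Proof.
rewrite pair_big /= -big_mkcond /=.
rewrite (partition_big (fun p : T * T => [set p.1; p.2]) (fun A => A \in eset)) /=.
  rewrite /nedges -/eset -sum1_card big_distrr /=.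
  apply: eq_bigr => A; rewrite inE => /existsP[x /existsP[y /andP[Hxy /eqP ->]]].
  have Hxy' : x != y by apply: contraTneq Hxy => ->; rewrite eirr.
  rewrite (bigD1 (x, y)) /=; last by rewrite Hxy eqxx.
  rewrite (bigD1 (y, x)) /=; last first.
    by rewrite esym Hxy setUC eqxx /= xpair_eqE eq_sym (negPf Hxy') andbF.
  rewrite big1 // => p /andP[/andP[/andP[Hp1 Hp2] Hn1] Hn2].
  move: Hp2; rewrite two_set // => /orP[/eqP Hq|/eqP Hq].
    by move: Hn1 Hq; case: (p) => ? ? /= Hn1 [E1 E2]; subst; rewrite eqxx in Hn1.
  by move: Hn2 Hq; case: (p) => ? ? /= Hn2 [E1 E2]; subst; rewrite eqxx in Hn2.
move=> [a b] /= Hab; rewrite inE; apply/existsP; exists a; apply/existsP; exists b.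
by rewrite Hab eqxx.
Qed.

End Count.

End File_C1.
Section File_S.
Local Open Scope ring_scope.
Local Open Scope sesquilinear_scope.
Lemma spec_facts n (A : 'M[algC]_n) : A \is symmetricmx -> A \is a realmx ->
  exists P : 'M[algC]_n, exists X : 'rV[algC]_n,
   [/\ P \is unitarymx, X \is a realmx & A = invmx P *m diag_mx X *m P].
Proof.
move=> As Ar.
have Ah := realsym_hermsym As Ar.
exists (spectralmx A), (spectral_diag A); split.
- exact: spectral_unitarymx.
- exact: hermitian_spectral_diag_real.
- by apply/orthomx_spectralP; exact: hermitian_normalmx.
Qed.

Lemma char_poly_conj n (P A : 'M[algC]_n) : P \in unitmx ->
  char_poly (invmx P *m A *m P) = char_poly A.
Proof.
move=> Pu; rewrite /char_poly /char_poly_mx.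
have -> : ('X%:M - map_mx polyC (invmx P *m A *m P) : 'M_n) =
   map_mx polyC (invmx P) *m ('X%:M - map_mx polyC A) *m map_mx polyC P.
  rewrite mulmxBr mulmxBl !map_mxM; congr (_ - _).
  rewrite mul_mx_scalar -scalemxAl -map_mxM mulVmx // map_mx1 scalemx1 //.
rewrite !det_mulmx !det_map_mx mulrC mulrA -rmorphM -det_mulmx mulmxV // det1.
by rewrite rmorph1 mul1r.
Qed.

Lemma char_poly_diag n (X : 'rV[algC]_n) :
  char_poly (diag_mx X) = \prod_(i < n) ('X - (X 0 i)%:P).
Proof.
by rewrite char_poly_trig ?diag_mx_is_trig //; apply: eq_bigr => i _; rewrite mxE eqxx mulr1n.
Qed.
Lemma quad_bound n (P : 'M[algC]_n) (X w : 'rV[algC]_n) c :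
  P \is unitarymx -> (forall i, c <= X 0 i) ->
  c * (w *m w^t*) 0 0 <= (w *m (invmx P *m diag_mx X *m P) *m w^t*) 0 0.
Proof.
move=> Pu hX.
set z := w *m P^t*.
have Hz : P *m w^t* = z^t* by rewrite /z trmx_mul map_mxM trmxCK.
have E1 : w *m (invmx P *m diag_mx X *m P) *m w^t* = z *m diag_mx X *m z^t*.
  by rewrite invmx_unitary // !mulmxA -/z -!mulmxA Hz.
have E2 : w *m w^t* = z *m z^t*.
  by rewrite -{1}(mulmxKtV w Pu) // -/z -mulmxA Hz.
rewrite E1 E2; clearbody z; rewrite mul_mx_diag !mxE mulr_sumr -subr_ge0 -sumrB sumr_ge0 // => i _.
rewrite !mxE.
have -> : z 0 i * X 0 i * (z 0 i)^* - c * (z 0 i * (z 0 i)^*) = (X 0 i - c) * (z 0 i * (z 0 i)^*) by ring.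
by rewrite mulr_ge0 ?subr_ge0 // -normCK exprn_ge0.
Qed.
Lemma tr_sq_conj n (P : 'M[algC]_n) (X : 'rV[algC]_n) : P \in unitmx ->
  let A := invmx P *m diag_mx X *m P in
  \tr (A *m A) = \sum_i X 0 i ^+ 2.
Proof.
move=> Pu A.
have -> : A *m A = invmx P *m (diag_mx X *m diag_mx X) *m P.
  by rewrite /A !mulmxA mulmxK // -[in RHS]mulmxA -[in RHS](mulmxA _ (diag_mx X)) ; rewrite !mulmxA.
rewrite mxtrace_mulC mulmxA mulmxV // mul1mx.
rewrite /mxtrace; apply: eq_bigr => i _; rewrite mul_diag_mx !mxE eqxx mulr1n expr2 //.
Qed.

Lemma perm_sum_sq n (X Y : 'rV[algC]_n) :
  \prod_(i < n) ('X - (X 0 i)%:P) = \prod_(i < n) ('X - (Y 0 i)%:P) ->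
  \sum_i X 0 i ^+ 2 = \sum_i Y 0 i ^+ 2.
Proof.
move=> H.
have Hp : perm_eq [seq X 0 i | i <- index_enum 'I_n] [seq Y 0 i | i <- index_enum 'I_n].
  apply: prod_XsubC_eq; by rewrite !big_map.
have := @perm_big algC +%R 0 _ _ _ xpredT (fun x : algC => x ^+ 2) Hp.
rewrite !big_map; exact.
Qed.

End File_S.
Section File_M1.
Local Open Scope ring_scope.
Local Open Scope sesquilinear_scope.

Section DM.
Variable m : nat.
Variable e : rel 'I_m.

Definition DM : 'M[algC]_m := map_mx (intr : int -> algC) (distmx e).

Lemma DM_E x y : DM x y = (gdist e x y)%:R.
Proof. by rewrite !mxE. Qed.

Lemma DM_real : DM \is a realmx.
Proof. by apply/mxOverP => i j; rewrite DM_E realn. Qed.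

Hypothesis esym : symmetric e.
Hypothesis Hr : forall u v, reach e u v.

Lemma DM_sym : DM \is symmetricmx.
Proof.
apply/is_hermitianmxP; rewrite expr0 scale1r; apply/matrixP => i j.
by rewrite !mxE (gdist_sym esym Hr).
Qed.

Lemma DM_tr : \tr (DM *m DM) = (\sum_x \sum_y gdist e x y ^ 2)%:R.
Proof.
rewrite natr_sum /mxtrace; apply: eq_bigr => x _.
rewrite mxE natr_sum; apply: eq_bigr => y _.
by rewrite !DM_E (gdist_sym esym Hr y x) natrX expr2.
Qed.

End DM.

Section W.
Variable m : nat.
Variables p0 p1 p2 p3 : 'I_m.

Definition wvec : 'rV[algC]_m :=
  \row_j (5 * (j == p0)%:R + 2 * (j == p1)%:R - 2 * (j == p2)%:R - 5 * (j == p3)%:R).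

Lemma sum_delta (g : 'I_m -> algC) p : \sum_j (j == p)%:R * g j = g p.
Proof.
by rewrite (bigD1 p) //= eqxx mul1r big1 ?addr0 // => j /negPf ->; rewrite mul0r.
Qed.

Lemma wsum (g : 'I_m -> algC) :
  \sum_j wvec 0 j * g j = 5 * g p0 + 2 * g p1 - 2 * g p2 - 5 * g p3.
Proof.
have -> : \sum_j wvec 0 j * g j = \sum_j (5 * ((j == p0)%:R * g j) + 2 * ((j == p1)%:R * g j)
   - 2 * ((j == p2)%:R * g j) - 5 * ((j == p3)%:R * g j)).
  by apply: eq_bigr => j _; rewrite mxE; ring.
by rewrite !sumrB big_split /= -!mulr_sumr !sum_delta.
Qed.

Lemma wquad (M : 'M[algC]_m) : (wvec *m M *m wvec^t*) 0 0 =
  5 * (5 * M p0 p0 + 2 * M p1 p0 - 2 * M p2 p0 - 5 * M p3 p0)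
+ 2 * (5 * M p0 p1 + 2 * M p1 p1 - 2 * M p2 p1 - 5 * M p3 p1)
- 2 * (5 * M p0 p2 + 2 * M p1 p2 - 2 * M p2 p2 - 5 * M p3 p2)
- 5 * (5 * M p0 p3 + 2 * M p1 p3 - 2 * M p2 p3 - 5 * M p3 p3).
Proof.
rewrite mxE.
have -> : \sum_j (wvec *m M) 0 j * (wvec^t*) j 0 = \sum_j wvec 0 j * (wvec *m M) 0 j.
  apply: eq_bigr => j _; rewrite mulrC; congr (_ * _).
  rewrite !mxE !rmorphB !rmorphD !rmorphM /= !conjC_nat //.
rewrite wsum !mxE !wsum //.
Qed.

End W.

End File_M1.
Section File_Main.

Section Pair.
Variable T : finType.
Variable e : rel T.
Hypothesis eirr : irreflexive e.
Hypothesis Hr : forall u v, reach e u v.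
Hypothesis Hle : forall a b, gdist e a b <= 2.

Lemma pair4 x y : gdist e x y ^ 2 + 3 * e x y + 4 * (x == y) = 4.
Proof.
have H0 := gdist0E Hr x y; have H1 := gdist_le1 Hr x y; have H2 := Hle x y.
have [Exy|Hne] := eqVneq x y.
  subst y; rewrite eirr eqxx in H0 *; by move/eqP: H0 => ->.
rewrite (negPf Hne) in H0 H1 *.
case Hxy: (e x y) H1 => H1 /=; move: H0 H1 H2; case: (gdist e x y) => [|[|[|g]]] //=.
Qed.

Lemma sq_formula : \sum_x \sum_y gdist e x y ^ 2 + 3 * \sum_x \sum_y (e x y : nat)
  + 4 * #|T| = 4 * (#|T| * #|T|).
Proof.
have -> : 4 * #|T| = \sum_(x : T) \sum_(y : T) 4 * (x == y).
  rewrite (eq_bigr (fun _ => 4)) ?sum_nat_const 1?mulnC // => x _.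
  by rewrite (bigD1 x) //= eqxx big1 ?addn0 // => y /negPf; rewrite eq_sym => ->.
have -> : 4 * (#|T| * #|T|) = \sum_(x : T) \sum_(y : T) 4.
  rewrite (eq_bigr (fun _ => #|T| * 4)); last by move=> x _; rewrite sum_nat_const.
  rewrite sum_nat_const; change #|xpredT| with #|T|; lia.
rewrite big_distrr /= -!big_split /=; apply: eq_bigr => x _.
rewrite big_distrr /= -!big_split /=; apply: eq_bigr => y _.
exact: pair4.
Qed.

End Pair.

Section Le2.
Local Open Scope ring_scope.
Local Open Scope sesquilinear_scope.
Variable m : nat.
Variable e : rel 'I_m.
Hypothesis esym : symmetric e.
Hypothesis eirr : irreflexive e.
Hypothesis Hr : forall u v, reach e u v.

Lemma G_le2 (P : 'M[algC]_m) (X : 'rV[algC]_m) : P \is unitarymx ->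
  DM e = invmx P *m diag_mx X *m P -> (forall i, -3 <= X 0 i) ->
  forall a b, (gdist e a b <= 2)%N.
Proof.
move=> Pu HP HX a b; rewrite leqNgt; apply/negP => Hab.
have [c Hc] := gdist_exists3 Hr Hab.
have [x2 [Hx2 Ex2c]] := gdist_desc Hr Hc.
have [x1 [Hx1 Ex1x2]] := gdist_desc Hr Hx2.
have dsym := gdist_sym esym Hr.
have d0 : forall u, gdist e u u = 0%N by move=> u; apply/eqP; rewrite (gdist0E Hr).
have dE1 : forall u v, e u v -> gdist e u v = 1%N.
  move=> u v Huv; have := gdist_le1 Hr u v; rewrite Huv orbT.
  have : gdist e u v != 0%N by rewrite (gdist0E Hr); apply: contraTneq Huv => ->; rewrite eirr.
  lia.
have d12 := dE1 _ _ Ex1x2.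
have d23 := dE1 _ _ Ex2c.
have d13 : gdist e x1 c = 2%N.
  have := gdist_tri Hr x1 x2 c; have := gdist_tri Hr a x1 c; lia.
have Hq := quad_bound (wvec a x1 x2 c) Pu HX.
rewrite -HP -{1}(mulmx1 (wvec a x1 x2 c)) !wquad !DM_E !mxE in Hq.
have na1 : (a == x1) = false by apply/negP => /eqP E; rewrite E d0 in Hx1.
have na2 : (a == x2) = false by apply/negP => /eqP E; rewrite E d0 in Hx2.
have na3 : (a == c) = false by apply/negP => /eqP E; rewrite E d0 in Hc.
have n12 : (x1 == x2) = false by apply/negP => /eqP E; rewrite E Hx2 in Hx1.
have n13 : (x1 == c) = false by apply/negP => /eqP E; rewrite E Hc in Hx1.
have n23 : (x2 == c) = false by apply/negP => /eqP E; rewrite E Hc in Hx2.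
rewrite !eqxx na1 na2 na3 n12 n13 n23 !(eq_sym x1 a) !(eq_sym x2 a) !(eq_sym c a)
  !(eq_sym x2 x1) !(eq_sym c x1) !(eq_sym c x2) na1 na2 na3 n12 n13 n23 in Hq.
rewrite !d0 Hc Hx2 Hx1 d12 d23 d13 !(dsym _ a) Hc Hx2 Hx1 !(dsym _ x1) d12 d13
  !(dsym _ x2) d23 in Hq.
move: Hq => /=.
set L := (X in X <= _); set R := (X in _ <= X).
have -> : L = - (174%:R) by rewrite /L; ring.
have -> : R = - (198%:R) by rewrite /R; ring.
by rewrite lerN2 ler_nat.
Qed.
End Le2.

Section EF.
Local Open Scope ring_scope.
Lemma EF_count k : (0 < k)%N -> (\sum_x \sum_y (friend_rel k x y : nat) = 6 * k)%N.
Proof.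
move=> k1.
apply/eqP; rewrite -(@eqr_nat algC) natr_sum; apply/eqP.
rewrite (eq_bigr (fun x => \sum_y (friend_rel k x y)%:R)); last by move=> x _; rewrite natr_sum.
rewrite exchange_big /= (bigD1 ord0) //=.
have H0 : \sum_x (friend_rel k x ord0)%:R = (k.*2)%:R :> algC.
  have E := nbr_sum0 (fun _ => 1 : algC); simpl in E.
  rewrite (eq_bigr (fun x => 1 * (friend_rel k x ord0)%:R)); last by move=> *; rewrite mul1r.
  rewrite E sumr_const card_ord -addn1 natrD; ring.
have H1 : forall y : 'I_k.*2.+1, y != ord0 -> \sum_x (friend_rel k x y)%:R = 2 :> algC.
  move=> y Hy; have E := nbr_sum (fun _ => 1 : algC) (y := y) Hy; simpl in E.
  rewrite (eq_bigr (fun x => 1 * (friend_rel k x y)%:R)); last by move=> *; rewrite mul1r.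
  by rewrite E.
rewrite H0 (eq_bigr (fun _ => 2)) // sumr_const.
have -> : #|[pred i : 'I_k.*2.+1 | i != ord0]| = k.*2 by rewrite cardC1 card_ord.
by rewrite -mulrnA -natrD; congr (_%:R); lia.
Qed.
End EF.


End File_Main.
Unset Implicit Arguments.
Theorem lemma2p10 (k : nat) (e : rel 'I_(k.*2.+1)) :
  2 <= k ->
  symmetric e -> irreflexive e -> gconnected e ->
  char_poly (distmx e) = char_poly (distmx (friend_rel k)) ->
  diam e = 2 /\ nedges e = nedges (friend_rel k) /\ nedges (friend_rel k) = 3 * k.
Proof.
move=> Hk esym eirr Hconn Hchar.
have k1 : (0 < k)%N by lia.
have Hr : forall u v, reach e u v := fun u v => conn_reach (Hconn u v).
have HrF := F_reach k1.
have [P [X [Pu Xr HP]]] := spec_facts (DM_sym esym Hr) (DM_real e).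
have [Q [Y [Qu Yr HQ]]] := spec_facts (DM_sym (@friend_sym k) HrF) (DM_real (friend_rel k)).
have Hcp : char_poly (DM e) = char_poly (DM (friend_rel k)).
  by rewrite /DM -!map_char_poly Hchar.
have HcX : char_poly (DM e) = (\prod_i ('X - (X 0 i)%:P))%R.
  by rewrite HP char_poly_conj ?unitarymx_unit // char_poly_diag.
have HcY : char_poly (DM (friend_rel k)) = (\prod_i ('X - (Y 0 i)%:P))%R.
  by rewrite HQ char_poly_conj ?unitarymx_unit // char_poly_diag.
have HX3 : forall i, (-3 <= X ord0 i)%R.
  move=> i.
  have Hroot : root (char_poly (DM (friend_rel k))) (X ord0 i).
    by rewrite -Hcp HcX (bigD1 i) //= rootM root_XsubC eqxx.
  move: Hroot; rewrite -eigenvalue_root_char => /eigenvalueP [v Hv Hvnz].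
  apply: (F_eig_ge k1 _ Hvnz Hv); exact: (mxOverP Xr ord0 i).
have Hle := G_le2 esym eirr Hr Pu HP HX3.
have HleF : forall a b, (gdist (friend_rel k) a b <= 2)%N.
  by move=> a b; rewrite (gdist_leE HrF) F_ball2.
have Hsq : \sum_x \sum_y gdist e x y ^ 2 = \sum_x \sum_y gdist (friend_rel k) x y ^ 2.
  apply/eqP; rewrite -(@eqr_nat algC) -(DM_tr esym Hr) -(DM_tr (@friend_sym k) HrF).
  rewrite HP HQ !tr_sq_conj ?unitarymx_unit //; apply/eqP.
  by apply: perm_sum_sq; rewrite -HcX -HcY.
have FG := sq_formula eirr Hr Hle.
have FF := sq_formula (@friend_irr k) HrF HleF.
have HEF := EF_count k1.
have HE : \sum_x \sum_y (e x y : nat) = \sum_x \sum_y (friend_rel k x y : nat) by lia.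
have Hne := count_edges esym eirr.
have HnF := count_edges (@friend_sym k) (@friend_irr k).
split; last by split; lia.
have Hd2 : (diam e <= 2)%N.
  by apply/bigmax_leqP => u _; apply/bigmax_leqP => v _; apply: Hle.
suff : ~~ (diam e <= 1)%N by lia.
apply/negP => Hd1.
have H1 : forall x y, (gdist e x y <= 1)%N.
  move=> x y; apply: leq_trans Hd1; apply: leq_trans (leq_bigmax x).
  exact: (leq_bigmax (F := fun v => gdist e x v) y).
have Hb : (\sum_x \sum_y gdist e x y ^ 2 <= \sum_(x : 'I_k.*2.+1) \sum_(y : 'I_k.*2.+1) 1)%N.
  apply: leq_sum => x _; apply: leq_sum => y _.
  by have := H1 x y; case: (gdist e x y) => [|[|]].
rewrite [X in (_ <= X)%N](eq_bigr (fun _ => k.*2.+1)) in Hb; last by move=> x _; rewrite sum_nat_const card_ord muln1.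
rewrite sum_nat_const card_ord in Hb.
rewrite card_ord in FF FG.
nia.
Qed.
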